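(* Let $d,N$ be positive integers, $P=(0,N)^d\cap\mathbb{Z}^d$, $\alpha\ge1$, and let $O\subseteq(0,N)^d$ be an open $\alpha$-fat set with $O\cap P\ne\emptyset$. Then $n_{\ell(O)}(O)\le(4\alpha+1)^d$.
   Context: A $d$-cube is an axis-parallel hypercube; width = side length. In-width of $O$: supremum of widths of $d$-cubes contained in $O$; out-width: infimum of widths of $d$-cubes containing $O$; $O$ is $\alpha$-fat if out-width$(O)\le\alpha\cdot$in-width$(O)$. For a positive integer $i$, $\ell(i)$ is the largest $k\ge0$ with $2^k\mid i$; for $x\in P$, $\ell(x)=\min_i\ell(x_i)$; $\ell(O)=\max\{\ell(x):x\in O\cap P\}$. For an integer $l$, $n_l(O)$ is the number of points of $O\cap P$ of level exactly $l$. *)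

(* Defs.v *)
From HB Require Import structures.
From mathcomp Require Import all_boot all_order all_algebra.
From mathcomp Require Import all_classical all_reals all_analysis.
Set Implicit Arguments. Unset Strict Implicit. Unset Printing Implicit Defensive.
Import Order.TTheory GRing.Theory Num.Theory.
Import numFieldNormedType.Exports.
Local Open Scope classical_set_scope.
Local Open Scope ring_scope.

Section Defs.
Variables (R : realType) (d : nat).

Definition cube (a : 'rV[R]_d) (w : R) : set 'rV[R]_d :=
  [set x | forall i, a ord0 i <= x ord0 i <= a ord0 i + w].

Definition in_width (O : set 'rV[R]_d) : \bar R :=
  ereal_sup [set w%:E | w in [set w : R | 0 <= w /\ exists a, cube a w `<=` O]].

Definition out_width (O : set 'rV[R]_d) : \bar R :=
  ereal_inf [set w%:E | w in [set w : R | 0 <= w /\ exists a, O `<=` cube a w]].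

Definition fat (alpha : R) (O : set 'rV[R]_d) : Prop :=
  (out_width O <= alpha%:E * in_width O)%E.

Variable N : nat.

(* candidate lattice points: coordinates in {0,..,N-1}; P = those with all
   coordinates positive *)
Definition ptR (p : {ffun 'I_d -> 'I_N}) : 'rV[R]_d := \row_i ((p i : nat)%:R).

Definition inP (p : {ffun 'I_d -> 'I_N}) : bool := [forall i, (0 < p i)%N].

(* l(i) = 2-adic valuation; l(x) = min_i l(x_i).  The neutral element N of the
   iterated min is irrelevant when d > 0, since logn 2 (p i) < N. *)
Definition lvl_pt (p : {ffun 'I_d -> 'I_N}) : nat :=
  \big[minn/N]_(i < d) logn 2 (p i).

Definition PinO (O : set 'rV[R]_d) : {set {ffun 'I_d -> 'I_N}} :=
  [set p | inP p && `[< O (ptR p) >]].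

Definition lvl_set (O : set 'rV[R]_d) : nat := \max_(p in PinO O) lvl_pt p.

Definition n_lvl (O : set 'rV[R]_d) (l : nat) : nat :=
  #|[set p in PinO O | lvl_pt p == l]|.

End Defs.

(* Main.v *)
Set Warnings "-all".
Require Import Defs.
From HB Require Import structures.
From mathcomp Require Import all_boot all_order all_algebra.
From mathcomp Require Import all_classical all_reals all_analysis.
From mathcomp Require Import lra.
Import Order.TTheory GRing.Theory Num.Theory.
Import numFieldNormedType.Exports.
Local Open Scope classical_set_scope.
Local Open Scope ring_scope.
Set Implicit Arguments. Unset Strict Implicit.

Lemma bigmin_le d N (F : 'I_d -> nat) j : (\big[minn/N]_(i < d) F i <= F j)%N.
Proof.
have : j \in index_enum 'I_d by rewrite mem_index_enum.
elim: (index_enum 'I_d) => [//|x r IH]; rewrite inE big_cons.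
case/orP => [/eqP -> | jr]; first exact: geq_minl.
exact: leq_trans (geq_minr _ _) (IH jr).
Qed.

Lemma bigmin_ge d N (F : 'I_d -> nat) k :
  (k <= N)%N -> (forall i, k <= F i)%N -> (k <= \big[minn/N]_(i < d) F i)%N.
Proof.
move=> kN kF; apply: (big_ind (fun x => k <= x)%N) => //.
by move=> x y hx hy; rewrite leq_min hx hy.
Qed.

Lemma logn_lt n : (0 < n)%N -> (logn 2 n < n)%N.
Proof.
move=> n0; apply: (@leq_trans (2 ^ logn 2 n)); first exact: ltn_expl.
by apply: dvdn_leq => //; apply: pfactor_dvdnn.
Qed.
Lemma count_bound (R : realType) (s : seq nat) (b t : R) : uniq s -> 0 <= t ->
  (forall x, x \in s -> b <= x%:R <= b + t) -> (size s)%:R <= t + 1.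
Proof.
move=> us t0 hs.
case: s us hs => [|x0 s] us hs.
  by rewrite /= ler_wpDl.
have exP : exists n, n \in x0 :: s by exists x0; rewrite mem_head.
case: (ex_minnP exP) => m ms mmin.
set K := Num.truncn t.
have sub : {subset x0 :: s <= iota m K.+1}.
  move=> x xs; rewrite mem_iota; have le := mmin _ xs.
  rewrite le /= -(subnKC le) ltn_add2l ltnS truncn_ge_nat //.
  have /andP[hx1 hx2] := hs _ xs; have /andP[hm1 hm2] := hs _ ms.
  rewrite natrB //; lra.
have := uniq_leq_size us sub; rewrite size_iota => hle.
apply: (le_trans (y := K.+1%:R)); first by rewrite ler_nat.
by rewrite -addn1 natrD lerD2r truncn_le.
Qed.

Theorem corollary2 (R : realType) (d N : nat) (hd : (0 < d)%N) (hN : (0 < N)%N)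
  (alpha : R) (O : set 'rV[R]_d) :
  1 <= alpha ->
  open O ->
  O `<=` [set x | forall i, 0 < x ord0 i < N%:R] ->
  fat alpha O ->
  (0 < #|PinO N O|)%N ->
  (n_lvl N O (lvl_set N O))%:R <= (4 * alpha + 1) ^+ d.
Proof.
move=> ha oO sub fatO hP.
set L := lvl_set N O.
have F1 : forall p, p \in PinO N O -> (lvl_pt p <= L)%N.
  by move=> p pin; rewrite /L /lvl_set (leq_bigmax_cond _ pin).
have [p0 p0in p0L] := eq_bigmax_cond (lvl_pt (N:=N)) hP.
have LN : (L < N)%N.
  rewrite /L /lvl_set p0L /lvl_pt.
  have := p0in; rewrite inE => /andP[/forallP hp _].
  have H := bigmin_le N (fun i => logn 2 (p0 i)) (Ordinal hd).
  have H2 := ltn_trans (logn_lt (hp (Ordinal hd))) (ltn_ord (p0 (Ordinal hd))).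
  exact: leq_ltn_trans H H2.
set M := (2 ^ L)%N.
set M2 := (2 ^ L.+1)%N.
have M0 : (0 < M)%N by rewrite expn_gt0.
have M20 : (0 < M2)%N by rewrite expn_gt0.
have noCube : forall a w, 0 <= w -> cube a w `<=` O -> w < M2%:R.
  move=> a w w0 cO; rewrite ltNge; apply/negP => hw.
  have a_in : forall i, 0 < a ord0 i < N%:R.
    by apply: sub; apply: cO => i; rewrite lexx lerDl.
  pose k i := ((Num.truncn (a ord0 i / M2%:R)).+1 * M2)%N.
  have hk : forall i, a ord0 i < (k i)%:R <= a ord0 i + w.
    move=> i; have /andP[ai0 _] := a_in i.
    have M2R : (0 : R) < M2%:R by rewrite ltr0n.
    have y0 : 0 <= a ord0 i / M2%:R by rewrite divr_ge0 // ltW.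
    have /andP[t1 t2] := truncn_itv y0.
    rewrite /k natrM.
    have e : a ord0 i = a ord0 i / M2%:R * M2%:R by rewrite divfK // gt_eqF.
    apply/andP; split.
      by rewrite {1}e ltr_pM2r.
    apply: (le_trans (y := a ord0 i + M2%:R)); last by rewrite lerD2l.
    by rewrite -natr1 mulrDl mul1r lerD2r {2}e ler_pM2r.
  pose x : 'rV[R]_d := \row_i (k i)%:R.
  have Ox : O x.
    apply: cO => i; rewrite mxE; have /andP[h1 h2] := hk i.
    by rewrite (ltW h1) h2.
  have hkN : forall i, (k i < N)%N.
    move=> i; have /andP[_ h] := sub _ Ox i; move: h; rewrite mxE.
    by rewrite ltr_nat.
  have hk0 : forall i, (0 < k i)%N by move=> i; rewrite /k muln_gt0 M20.
  pose q : {ffun 'I_d -> 'I_N} := [ffun i => Ordinal (hkN i)].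
  have qx : ptR R q = x by apply/rowP => i; rewrite !mxE ffunE.
  have qin : q \in PinO N O.
    rewrite inE; apply/andP; split.
      by apply/forallP => i; rewrite ffunE /=.
    by apply/asboolP; rewrite qx.
  have := F1 _ qin; apply/negP; rewrite -ltnNge.
  apply: bigmin_ge => // i; rewrite ffunE /= -pfactor_dvdn //.
  by rewrite /k dvdn_mull.
have inW : (in_width O <= (M2%:R : R)%:E)%E.
  apply: ge_ereal_sup => y [w [w0 [a ca]] <-]; rewrite lee_fin.
  exact: ltW (noCube _ _ w0 ca).
have MR : (0 : R) < M%:R by rewrite ltr0n.
have M2M : (M2%:R : R) = 2 * M%:R by rewrite /M2 expnS natrM.
have outW : (out_width O < (4 * alpha * M%:R)%:E)%E.
  apply: le_lt_trans fatO _.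
  apply: (le_lt_trans (y := (alpha%:E * (M2%:R : R)%:E)%E)).
    by apply: lee_wpmul2l => //; rewrite lee_fin; lra.
  by rewrite -EFinM lte_fin M2M; nra.
have [y [w [w0 [a ca]] <-] hw] := ereal_inf_lt outW.
rewrite lte_fin in hw.
pose T i : {set 'I_N} :=
  ([set k : 'I_N | (M %| k)%N && (a ord0 i <= (k : nat)%:R <= a ord0 i + w)])%SET.
have Tb : forall i, (#|T i|%:R : R) <= 4 * alpha + 1.
  move=> i.
  have -> : #|T i| = size [seq (nat_of_ord k %/ M)%N | k <- enum (T i)]
    by rewrite size_map -cardE.
  apply: (le_trans (y := w / M%:R + 1)); last first.
    by rewrite lerD2r ler_pdivrMr //; apply: ltW.
  apply: (count_bound (b := a ord0 i / M%:R)).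
  - rewrite map_inj_in_uniq ?enum_uniq // => k1 k2.
    rewrite !mem_enum !inE => /andP[d1 _] /andP[d2 _] e.
    by apply: val_inj; rewrite /= -(divnK d1) -(divnK d2) e.
  - by rewrite divr_ge0 // ltW.
  - move=> z /mapP[k]; rewrite mem_enum inE => /andP[dk /andP[k1 k2]] ->.
    have e : ((k %/ M)%N%:R : R) = (k : nat)%:R / M%:R.
      by rewrite -(divnK dk) mulnK // natrM mulfK // gt_eqF.
    rewrite e -mulrDl ler_pdivlMr // ler_pdivrMr // divfK ?gt_eqF //.
    by rewrite k1 /= divfK ?gt_eqF.
set S := ([set p in PinO N O | lvl_pt p == L])%SET.
have SF : S \subset family (fun i => [pred k | k \in T i]).
  apply/fintype.subsetP => p; rewrite inE => /andP[pin /eqP pL].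
  have := pin; rewrite inE => /andP[/forallP p0' /asboolP Op].
  apply/familyP => i; rewrite inE; apply/andP; split.
    rewrite /M pfactor_dvdn //; rewrite -pL; exact: bigmin_le.
  by have := ca _ Op i; rewrite mxE.
rewrite /n_lvl -/S.
apply: (le_trans (y := #|family (fun i => [pred k | k \in T i])|%:R)).
  by rewrite ler_nat; apply: subset_leq_card.
rewrite card_family /image_mem.
have key : forall r : seq 'I_d,
  (foldr muln 1%N [seq #|[pred k | k \in T x]| | x <- r])%:R <= (4 * alpha + 1) ^+ (size r).
  elim => [|i r IH] /=; first by rewrite expr0.
  rewrite natrM exprS; apply: ler_pM => //.
  by apply: (le_trans _ (Tb i)); rewrite le_eqVlt; apply/orP; left; apply/eqP; congr (_%:R); apply: eq_card => k; rewrite !inE.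
by apply: le_trans (key (enum 'I_d)) _; rewrite size_enum_ord.
Qed.
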